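(* Let $\mathcal{D}[t]\subset\mathcal{H}\subset\mathcal{D}^\times[t^\times]$ be a rigged Hilbert space, let $\{\xi_n\}$ be a Schauder basis for $\mathcal{D}[t]$, and let $\{\zeta_n\}\subset\mathcal{D}^\times$ be the sequence of coefficient functionals, i.e. the unique elements with $f=\sum_{n=1}^\infty\overline{\langle\zeta_n,f\rangle}\xi_n$ for all $f\in\mathcal{D}$. Then: (i) $\{\zeta_n\}$ is complete (its linear span is dense) in $\mathcal{D}^\times[\tau]$, where $\tau$ is any topology of the conjugate dual pair $(\mathcal{D}^\times,\mathcal{D})$ (i.e. compatible with this duality); if $\mathcal{D}[t]$ is reflexive, $\{\zeta_n\}$ is complete also with respect to $t^\times$. (ii) $\{\zeta_n\}$ is a basis for $\mathcal{D}^\times$ with respect to the weak topology: for every $\Psi\in\mathcal{D}^\times$, $$\langle\Psi,f\rangle=\sum_{k=1}^\infty\langle\Psi,\xi_k\rangle\langle\zeta_k,f\rangle,\quad\forall f\in\mathcal{D}.$$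
   Context: A rigged Hilbert space $\mathcal{D}[t]\subset\mathcal{H}\subset\mathcal{D}^\times[t^\times]$ consists of a dense subspace $\mathcal{D}$ of a Hilbert space $\mathcal{H}$ endowed with a locally convex topology $t$ finer than the topology induced by the Hilbert norm, and the space $\mathcal{D}^\times$ of all continuous conjugate-linear functionals on $\mathcal{D}[t]$, endowed with the strong dual topology $t^\times=\beta(\mathcal{D}^\times,\mathcal{D})$; $\mathcal{H}$ is identified with a subspace of $\mathcal{D}^\times$ and the duality form $\langle\Phi,f\rangle$ ($\Phi\in\mathcal{D}^\times$, $f\in\mathcal{D}$; the value of $\Phi$ at $f$) extends the inner product of $\mathcal{H}$. A Schauder basis of $\mathcal{D}[t]$ is a sequence $\{\xi_n\}$ such that every $\phi\in\mathcal{D}$ has a unique expansion $\phi=\sum c_n(\phi)\xi_n$ converging in $\mathcal{D}[t]$ with each coefficient functional $c_n$ $t$-continuous; then $c_n(f)=\overline{\langle\zeta_n,f\rangle}$ for a unique $\zeta_n\in\mathcal{D}^\times$. *)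

(* Defs.v *)
From HB Require Import structures.
From mathcomp Require Import all_boot all_order all_algebra.
From mathcomp Require Import all_classical all_reals all_analysis.
From mathcomp Require Import complex.
Import Order.TTheory GRing.Theory Num.Theory.
Import numFieldTopology.Exports numFieldNormedType.Exports.

Set Implicit Arguments.
Unset Strict Implicit.
Unset Printing Implicit Defensive.

Local Open Scope ring_scope.
Local Open Scope classical_set_scope.

(* The usual (norm) topology on the complex numbers R[i]. *)
#[non_forgetful_inheritance]
HB.instance Definition _ (R : realType) := PseudoPointedMetric.copy R[i] R[i]^o.

Section Rigged.
Variable R : realType.
Local Notation C := R[i].

Definition inner_product (H : normedModType C) (ip : H -> H -> C) :=
  [/\ forall a x y z, ip (a *: x + y) z = a * ip x z + ip y z,
      forall x y, ip y x = (ip x y)^*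
    & forall x, ip x x = `|x| ^+ 2].

(* Rigged Hilbert space D[t] ⊂ H ⊂ D^x: D is the locally convex space E,
   embedded in the Hilbert space H by the injective linear map j, which has
   dense range and is continuous (t finer than the Hilbert norm topology).
   H is identified with a subspace of D^x via h |-> (f |-> ip h (j f)). *)
Definition rigged_hilbert (E : tvsType C) (H : completeNormedModType C)
    (ip : H -> H -> C) (j : E -> H) :=
  [/\ inner_product ip,
      forall a x y, j (a *: x + y) = a *: j x + j y,
      injective j,
      continuous j
    & closure (range j) = setT].

Definition linear_fun (T : tvsType C) (L : T -> C) :=
  forall a x y, L (a *: x + y) = a * L x + L y.

Definition conj_linear_fun (E : tvsType C) (u : E -> C) :=
  forall a x y, u (a *: x + y) = a^* * u x + u y.

(* D^x : continuous conjugate-linear functionals on E; <Phi, f> = Phi f. *)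
Definition conj_dual (E : tvsType C) : set (E -> C) :=
  [set u | conj_linear_fun u /\ continuous u].

Definition schauder_basis (E : tvsType C) (xi : nat -> E) :=
  exists c : nat -> E -> C,
    (forall n, continuous (c n)) /\
    forall f : E,
      (\sum_(k < n) c k f *: xi k @[n --> \oo] --> f) /\
      forall d : nat -> C, (\sum_(k < n) d k *: xi k @[n --> \oo] --> f) ->
        d = (fun n => c n f).

Definition coef_functionals (E : tvsType C) (xi : nat -> E)
    (zeta : nat -> E -> C) :=
  (forall n, @conj_dual E (zeta n)) /\
  forall f : E, \sum_(k < n) (zeta k f)^* *: xi k @[n --> \oo] --> f.

(* A locally convex space T together with iota : T -> (E -> C) which is a
   linear bijection of T onto D^x: a model of D^x carrying some topology. *)
Definition dual_model (E T : tvsType C) (iota : T -> E -> C) :=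
  [/\ injective iota,
      forall a x y, iota (a *: x + y) = (fun f => a * iota x f + iota y f)
    & range iota = @conj_dual E].

Definition dual_pair_topology (E T : tvsType C) (iota : T -> E -> C) :=
  dual_model iota /\
  [set L : T -> C | linear_fun L /\ continuous L] =
  [set L | exists f : E, L = (fun x => iota x f)].

Definition tvs_bounded (T : tvsType C) (B : set T) :=
  forall U : set T, nbhs 0 U ->
    exists r : C, 0 < r /\
      forall mu : C, r <= `|mu| -> B `<=` [set mu *: u | u in U].

Definition strong_dual (E T : tvsType C) (iota : T -> E -> C) :=
  dual_model iota /\
  forall (x : T) (A : set T), nbhs x A <->
    exists B : set E, tvs_bounded B /\
      exists2 eps : C, 0 < eps &
        [set y | forall f, B f -> `|iota y f - iota x f| < eps] `<=` A.

(* Reflexivity of D[t] (relative to a model T of the strong dual):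
   the canonical map D -> (D^x[t^x])' is bijective, and t coincides with the
   strong topology beta(D, D^x) of uniform convergence on t^x-bounded sets. *)
Definition reflexive_via (E T : tvsType C) (iota : T -> E -> C) :=
  [/\ forall f g : E, (forall x, iota x f = iota x g) -> f = g,
      forall L : T -> C, linear_fun L -> continuous L ->
        exists f : E, forall x, L x = iota x f
    & forall (f : E) (A : set E), nbhs f A <->
        exists M : set T, tvs_bounded M /\
          exists2 eps : C, 0 < eps &
            [set g | forall x, M x -> `|iota x g - iota x f| < eps] `<=` A].

Definition reflexive_space (E : tvsType C) :=
  forall (T : tvsType C) (iota : T -> E -> C),
    strong_dual iota -> reflexive_via iota.

Definition lin_span (E : tvsType C) (zeta : nat -> E -> C) : set (E -> C) :=
  [set u | exists (n : nat) (c : nat -> C),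
           u = (fun f => \sum_(k < n) c k * zeta k f)].

End Rigged.
Arguments conj_dual {R} E.

(* Main.v *)
Require Import Defs.
From HB Require Import structures.
From mathcomp Require Import all_boot all_order all_algebra.
From mathcomp Require Import all_classical all_reals all_analysis.
From mathcomp Require Import complex.
Import Order.TTheory GRing.Theory Num.Theory.
Import numFieldTopology.Exports numFieldNormedType.Exports.
Local Open Scope ring_scope.
Local Open Scope classical_set_scope.
From mathcomp Require Import ring lra.
Definition rscal (R : realType) (T : lmodType R[i]) (r : R) (y : T) : T :=
  (r%:C)%C *: y.

Section RealScal.
Variable R : realType.
Variable T : lmodType R[i].
Local Notation rsc := (rscal R T).


Lemma rscM a b y : rsc (a * b) y = rsc a (rsc b y).
Proof. by rewrite /rscal rmorphM scalerA. Qed.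
Lemma rscDl a b y : rsc (a + b) y = rsc a y + rsc b y.
Proof. by rewrite /rscal rmorphD scalerDl. Qed.
Lemma rscDr a y z : rsc a (y + z) = rsc a y + rsc a z.
Proof. by rewrite /rscal scalerDr. Qed.
Lemma rsc1 y : rsc 1 y = y.
Proof. by rewrite /rscal rmorph1 scale1r. Qed.
Lemma rsc0 y : rsc 0 y = 0.
Proof. by rewrite /rscal rmorph0 scale0r. Qed.
Lemma rscr0 a : rsc a 0 = 0.
Proof. by rewrite /rscal scaler0. Qed.
Lemma rscN a y : rsc a (- y) = - rsc a y.
Proof. by rewrite /rscal scalerN. Qed.
Lemma rscNl a y : rsc (- a) y = - rsc a y.
Proof. by rewrite /rscal rmorphN scaleNr. Qed.
Lemma rscK a y : a != 0 -> rsc a^-1 (rsc a y) = y.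
Proof. by move=> a0; rewrite -rscM mulVf // rsc1. Qed.

Variable U : set T.
Hypothesis Uconv : forall y z (t : R), 0 <= t <= 1 -> U y -> U z ->
  U (rsc t y + rsc (1 - t) z).
Hypothesis U0 : U 0.
Hypothesis Usym : forall y, U y -> U (- y).
Hypothesis Uabs : forall y, exists2 t : R, 0 < t & U (rsc t^-1 y).

Definition gS y := [set t : R | 0 < t /\ U (rsc t^-1 y)].
Definition gauge y := inf (gS y).

Lemma gS_ne y : gS y !=set0.
Proof. by have [t t0 Ut] := Uabs y; exists t. Qed.
Lemma gS_lb y : has_lbound (gS y).
Proof. by exists 0 => t [/ltW]. Qed.
Lemma gS_inf y : has_inf (gS y).
Proof. by split; [exact: gS_ne|exact: gS_lb]. Qed.

Lemma gauge_ge0 y : 0 <= gauge y.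
Proof. by apply: lb_le_inf; [exact: gS_ne| move=> t [/ltW]]. Qed.

Lemma gS_up y s t : gS y s -> s <= t -> gS y t.
Proof.
move=> [s0 Us] st; have t0 : 0 < t by apply: lt_le_trans st.
split => //.
have -> : rsc t^-1 y = rsc (s / t) (rsc s^-1 y) + rsc (1 - s / t) 0.
  by rewrite rscr0 addr0 -rscM mulrAC mulfV ?gt_eqF // mul1r.
apply: Uconv => //.
by rewrite divr_ge0 ?(ltW s0) ?(ltW t0) //= ler_pdivrMr // mul1r.
Qed.

Lemma gauge_lt y t : gauge y < t -> gS y t.
Proof.
move=> lt; have := @inf_adherent _ (gS y) (t - gauge y).
rewrite subr_gt0 => /(_ lt (gS_inf y)) [s Ss]; rewrite addrC subrK => st.
exact: gS_up Ss (ltW st).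
Qed.

Lemma gauge_lt1 y : gauge y < 1 -> U y.
Proof. by move=> /gauge_lt [_]; rewrite invr1 rsc1. Qed.

Lemma gauge_le1 y : U y -> gauge y <= 1.
Proof. by move=> Uy; apply: ge_inf; [exact: gS_lb|split; rewrite ?invr1 ?rsc1]. Qed.

Lemma gaugeZ_le s y : 0 < s -> gauge (rsc s y) <= s * gauge y.
Proof.
move=> s0; rewrite -ler_pdivrMl //; apply: lb_le_inf; first exact: gS_ne.
move=> t [t0 Ut]; rewrite ler_pdivrMl //; apply: ge_inf; first exact: gS_lb.
split; first exact: mulr_gt0.
by rewrite invfM -rscM mulrAC mulVf ?gt_eqF // mul1r.
Qed.

Lemma gaugeZ_ge s y : 0 < s -> s * gauge y <= gauge (rsc s y).
Proof.
move=> s0; have si : 0 < s^-1 by rewrite invr_gt0.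
have := @gaugeZ_le s^-1 (rsc s y) si.
by rewrite rscK ?gt_eqF // => h; rewrite -ler_pdivlMl.
Qed.

Lemma gaugeD y z : gauge (y + z) <= gauge y + gauge z.
Proof.
apply/ler_addgt0Pr => e e0.
have ha : gS y (gauge y + e / 2) by apply: gauge_lt; rewrite ltrDl divr_gt0.
have hb : gS z (gauge z + e / 2) by apply: gauge_lt; rewrite ltrDl divr_gt0.
have -> : gauge y + gauge z + e = (gauge y + e / 2) + (gauge z + e / 2).
  by field.
move: ha hb; set a := gauge y + e / 2; set b := gauge z + e / 2.
move=> [a0 Ua] [b0 Ub].
apply: ge_inf; first exact: gS_lb.
have ab0 : 0 < a + b by apply: addr_gt0.
split => //.
have -> : rsc (a + b)^-1 (y + z) =
    rsc (a / (a + b)) (rsc a^-1 y) + rsc (1 - a / (a + b)) (rsc b^-1 z).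
  rewrite -!rscM rscDr; congr (rsc _ _ + rsc _ _).
    by field; rewrite gt_eqF // gt_eqF.
  by field; rewrite gt_eqF // gt_eqF.
apply: Uconv => //.
rewrite divr_ge0 ?(ltW a0) ?(ltW ab0) //= ler_pdivrMr // mul1r.
by rewrite lerDl ltW.
Qed.

Lemma gaugeN y : gauge (- y) = gauge y.
Proof.
rewrite /gauge; congr inf; rewrite /gS; apply/funext => t; apply/propext.
split=> -[t0 Ut]; split => //.
  by rewrite -[y]opprK rscN; apply: Usym.
by rewrite rscN; apply: Usym.
Qed.

End RealScal.
Section HahnBanach.
Variable R : realType.
Variable T : lmodType R[i].
Local Notation rsc := (rscal R T).
Variable p : T -> R.
Hypothesis pD : forall y z, p (y + z) <= p y + p z.
Hypothesis pZ : forall s y, 0 < s -> s * p y <= p (rsc s y).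

Definition lgraph (G : set (T * R)) :=
  [/\ forall y a b, G (y, a) -> G (y, b) -> a = b,
      forall y z a b r, G (y, a) -> G (z, b) -> G (rsc r y + z, r * a + b)
    & forall y a, G (y, a) -> a <= p y].

Section lg.
Variable G : set (T * R).
Hypothesis lG : lgraph G.
Lemma lg0 y a : G (y, a) -> G (0, 0).
Proof.
case: lG => _ L _ Ga; have := L _ _ _ _ (-1) Ga Ga.
by rewrite rscNl rsc1 addNr mulN1r addNr.
Qed.
Lemma lgZ y a r : G (y, a) -> G (rsc r y, r * a).
Proof.
move=> Ga; have := (let: And3 _ L _ := lG in L) _ _ _ _ r Ga (@lg0 _ _ Ga).
by rewrite !addr0.
Qed.
Lemma lgD y z a b : G (y, a) -> G (z, b) -> G (y + z, a + b).
Proof.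
by move=> Ga Gb; have := (let: And3 _ L _ := lG in L) _ _ _ _ 1 Ga Gb; rewrite rsc1 mul1r.
Qed.
End lg.

Theorem hahn_banach_real (G0 : set (T * R)) :
  lgraph G0 -> G0 !=set0 ->
  exists l : T -> R, [/\ forall r y z, l (rsc r y + z) = r * l y + l z,
    forall y, l y <= p y & forall y a, G0 (y, a) -> l y = a].
Proof.
move=> lG0 [[m0 a0] G0m0].
pose P := fun G => lgraph G /\ (G0 `<=` G \/ G = set0).
have [A [[lA hA] maxA]] : exists A, P A /\ forall B, A `<` B -> ~ P B.
  apply: Zorn_bigcup => F FP Ftot; split.
    split.
    - move=> y a b [G1 FG1 G1a] [G2 FG2 G2b].
      case: (Ftot _ _ FG1 FG2) => sub.
        by have [[f _ _] _] := FP _ FG2; exact: f _ _ _ (sub _ G1a) G2b.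
      by have [[f _ _] _] := FP _ FG1; exact: f _ _ _ G1a (sub _ G2b).
    - move=> y z a b r [G1 FG1 G1a] [G2 FG2 G2b].
      case: (Ftot _ _ FG1 FG2) => sub.
        have [[_ f _] _] := FP _ FG2.
        by exists G2 => //; exact: f _ _ _ _ _ (sub _ G1a) G2b.
      have [[_ f _] _] := FP _ FG1.
      by exists G1 => //; exact: f _ _ _ _ _ G1a (sub _ G2b).
    - by move=> y a [G FG Ga]; have [[_ _ d] _] := FP _ FG; exact: d.
  case: (pselect (exists2 G, F G & G0 `<=` G)) => [[G FG sub]|nG].
    by left => q /sub Gq; exists G.
  right; apply/seteqP; split => // q [G FG Gq].
  have [_ [sub|e]] := FP _ FG; first by exfalso; apply: nG; exists G.
  by rewrite e in Gq.
have sA : G0 `<=` A.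
  case: hA => // eA; exfalso; apply: (maxA G0); last by split => //; left.
  by rewrite eA; split => // /(_ (m0, a0) G0m0).
have A00 : A (0, 0) by apply: (@lg0 A lA m0 a0); apply: sA G0m0.
have Atot : forall y, exists a, A (y, a).
  move=> y; apply/not_existsP => ny.
  pose S := [set u | exists m a, A (m, a) /\ u = a - p (m - y)].
  have Sub : forall m2 b, A (m2, b) -> ubound S (p (m2 + y) - b).
    move=> m2 b Ab _ [m [a [Am ->]]].
    rewrite lerBrDr addrAC lerBlDr.
    apply: le_trans (pD _ _); rewrite addrCA addrK.
    by case: (lA) => _ _ d; apply: d; apply: (@lgD A lA).
  have Sne : S !=set0 by exists (0 - p (0 - y)), 0, 0.
  have Shas : has_sup S by split => //; exists (p (0 + y) - 0); apply: Sub.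
  pose c := sup S.
  have cle : forall m2 b, A (m2, b) -> c <= p (m2 + y) - b.
    by move=> m2 b Ab; apply: ge_sup => //; apply: Sub.
  have cge : forall m a, A (m, a) -> a - p (m - y) <= c.
    by move=> m a Am; apply: sup_upper_bound => //; exists m, a.
  pose B := [set q | exists m a s, A (m, a) /\ q = (m + rsc s y, a + s * c)].
  apply: (maxA B).
    split.
      move=> [m a] Am; exists m, a, 0; split => //.
      by rewrite rsc0 mul0r !addr0.
    move=> /(_ (y, c)) BA; apply: (ny c); apply: BA.
    by exists 0, 0, 1; split => //; rewrite add0r rsc1 mul1r add0r.
  split; last by left => q /sA Aq; exists q.1, q.2, 0; rewrite rsc0 mul0r !addr0; case: q Aq.
  split.
  - move=> q a b [m [a1 [s [Am [-> ->]]]]] [m' [a1' [s' [Am' []]]]] e1 ->.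
    have [ss|ss] := eqVneq s s'.
      rewrite -ss in e1; move/addIr: e1 => em; rewrite em in Am.
      by rewrite ss; congr (_ + _); case: (lA) => f _ _; apply: f Am Am'.
    exfalso; apply: (ny ((s - s')^-1 * (a1' - a1))).
    have -> : y = rsc (s - s')^-1 (m' - m).
      have e2 : m' - m = rsc (s - s') y.
        have e1' : m' = m + rsc s y - rsc s' y by rewrite e1 addrK.
        by rewrite rscDl rscNl e1' addrC !addrA addNr add0r.
      by rewrite e2 rscK // subr_eq0.
    have := @lgZ A lA _ _ (-1) Am; rewrite rscNl rsc1 mulN1r => Amn.
    by apply: (@lgZ A lA); apply: (@lgD A lA _ _ _ _ Am' Amn).
  - move=> y1 y2 b1 b2 r [m [a [s [Am [-> ->]]]]] [m' [a' [s' [Am' [-> ->]]]]].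
    exists (rsc r m + m'), (r * a + a'), (r * s + s'); split.
      by case: (lA) => _ L _; apply: L.
    congr pair.
      by rewrite rscDr -rscM rscDl; rewrite !addrA; congr (_ + _); rewrite -!addrA; congr (_ + _); rewrite addrC.
    by ring.
  - move=> q b [m [a [s [Am [-> ->]]]]].
    have [s0|s0|->] := ltgtP s 0; last first.
    + by rewrite rsc0 mul0r !addr0; case: (lA) => _ _ d; apply: d.
    + have := cle _ _ (@lgZ A lA _ _ s^-1 Am).
      rewrite -(ler_pM2l s0) mulrBr mulrA mulfV ?gt_eqF // mul1r => h.
      rewrite -lerBrDl; apply: (le_trans h); rewrite lerD2r.
      have := @pZ s (rsc s^-1 m + y) s0.
      by rewrite rscDr -rscM mulfV ?gt_eqF // rsc1.
    + set u := - s; have u0 : 0 < u by rewrite oppr_gt0.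
      have := cge _ _ (@lgZ A lA _ _ u^-1 Am).
      rewrite -(ler_pM2l u0) mulrBr mulrA mulfV ?gt_eqF // mul1r => h.
      have -> : s = - u by rewrite opprK.
      rewrite mulNr rscNl.
      have h' : a - u * c <= u * p (rsc u^-1 m - y).
        by move: h; rewrite !lerBlDr addrC.
      apply: (le_trans h').
      have := @pZ u (rsc u^-1 m - y) u0.
      by rewrite rscDr -rscM mulfV ?gt_eqF // rsc1 rscN.
have [l hl] := choice Atot.
exists l; split.
- move=> r y z; case: (lA) => f L _; apply: f (hl _) _.
  by apply: L; apply: hl.
- by move=> y; case: (lA) => _ _ d; apply: d.
- by move=> y a /sA Aa; case: (lA) => f _ _; apply: f (hl _) Aa.
Qed.
End HahnBanach.
Local Open Scope complex_scope.
Lemma normcR (R : realType) (x : R) : `|x%:C| = `|x|%:C.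
Proof. by rewrite normc_def /= expr0n /= addr0 sqrtr_sqr. Qed.

Section Sep.
Variable R : realType.
Variable T : tvsType R[i].
Local Notation rsc := (rscal R T).

Lemma convex_rsc (B : set T) : convex_set B ->
  forall y z (t : R), 0 <= t <= 1 -> B y -> B z -> B (rsc t y + rsc (1 - t) z).
Proof.
move=> cB y z t /andP[t0 t1] By Bz.
have t0' : (0 <= t%:C)%R by rewrite lecR.
have t1' : (t%:C <= 1)%R by rewrite -(rmorph1 (real_complex R)) lecR.
have := cB y z (Itv01 t0' t1') (mem_set By) (mem_set Bz).
rewrite inE /= /rscal rmorphB rmorph1 //.
Qed.
End Sep.
Section Sep2.
Variable R : realType.
Variable T : tvsType R[i].
Local Notation rsc := (rscal R T).

Lemma nbhs_basis_convex (x : T) (A : set T) : nbhs x A ->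
  exists B : set T, [/\ open B, B x, B `<=` A & convex_set B].
Proof.
move=> Ax; have [Bs cBs [oBs bBs]] := @locally_convex _ T.
have [B [BB Bx] BA] := bBs x A Ax.
exists B; split => //; first exact: oBs.
by apply: cBs; rewrite inE.
Qed.

End Sep2.
Lemma pos_complex (R : realType) (e : R[i]) : (0 < e)%R -> exists2 r : R, (0 < r)%R & e = r%:C.
Proof. by case: e => a b; rewrite ltcE /= => /andP[/eqP -> a0]; exists a. Qed.

Section Sep3.
Variable R : realType.
Variable T : tvsType R[i].
Local Notation rsc := (rscal R T).
Variables (x : T) (B : set T).
Hypotheses (oB : open B) (Bx : B x) (cB : convex_set B).

Definition U0 := [set y | B (x + y) /\ B (x - y)].

Lemma rsc_aff t (a y z : T) :
  a + (rsc t y + rsc (1 - t) z) = rsc t (a + y) + rsc (1 - t) (a + z).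
Proof.
rewrite !rscDr addrACA -rscDl.
have -> : (t + (1 - t) = 1)%R by rewrite addrC subrK.
by rewrite rsc1.
Qed.

Lemma U0conv y z (t : R) : (0 <= t <= 1)%R -> U0 y -> U0 z ->
  U0 (rsc t y + rsc (1 - t) z).
Proof.
move=> t01 [By1 By2] [Bz1 Bz2]; split.
  by rewrite rsc_aff; apply: convex_rsc.
rewrite opprD -!rscN rsc_aff; apply: convex_rsc => //.
Qed.

Lemma U00 : U0 0.
Proof. by split; rewrite ?addr0 ?subr0. Qed.

Lemma U0sym y : U0 y -> U0 (- y).
Proof. by move=> [h1 h2]; split; rewrite ?opprK. Qed.

Lemma U0nbhs : nbhs 0 U0.
Proof.
have nB : nbhs x B by apply: open_nbhs_nbhs; split.
have S1 : nbhs 0 [set y | B (x + y)].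
  have := nbhsB (- x) nB; rewrite addNr; apply: filterS.
  by move=> _ [b Bb <-] /=; rewrite addNKr.
have S2 : nbhs 0 [set y | B (x - y)].
  have := nbhs0N S1; apply: filterS.
  by move=> _ [b Bb <-] /=; rewrite opprK.
by apply: filterI.
Qed.

Lemma U0abs y : exists2 t : R, (0 < t)%R & U0 (rsc t^-1 y).
Proof.
have /= := @scale_continuous _ T (0, y) U0.
rewrite scale0r => /(_ U0nbhs) [] /= N [N1 N2] NU.
have [e e0 He] := (@nbhs_norm0P _ (R[i]^o) _).1 N1.
have [er er0 ee] := @pos_complex R e e0; rewrite ee in He.
exists (2 / er); first by rewrite divr_gt0.
have := NU ((2 / er)^-1%:C, y); apply; split => //=; last exact: nbhs_singleton.
apply: He; rewrite /= normcR ltcR invf_div gtr0_norm ?divr_gt0 //.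
by rewrite ltr_pdivrMr // ltr_pMr // ltr1n.
Qed.

Definition pg := gauge R T U0.

Lemma pgD y z : (pg (y + z) <= pg y + pg z)%R.
Proof. exact: (gaugeD _ _ _ U0conv U00 U0abs). Qed.
Lemma pgZ s y : (0 < s)%R -> (s * pg y <= pg (rsc s y))%R.
Proof. exact: (gaugeZ_ge _ _ _ U0abs). Qed.
Lemma pgN y : pg (- y) = pg y.
Proof. exact: (gaugeN _ _ _ U0sym). Qed.
Lemma pg0 y : (0 <= pg y)%R.
Proof. exact: (gauge_ge0 _ _ _ U0abs). Qed.
Lemma pg_lt1 y : (pg y < 1)%R -> U0 y.
Proof. exact: (gauge_lt1 _ _ _ U0conv U00 U0abs). Qed.
Lemma pg_le1 y : U0 y -> (pg y <= 1)%R.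
Proof. exact: gauge_le1. Qed.

End Sep3.
Lemma complex_ii (R : realType) : ('i * 'i = -1 :> R[i])%R.
Proof. by apply/eqP; rewrite eq_complex /=; apply/andP; split; apply/eqP; ring. Qed.

Lemma normc_ir (R : realType) (r : R) : `|'i * r%:C| = `|r|%:C.
Proof.
rewrite normc_def /=.
have -> : ((0 * r - 1 * 0) ^+ 2 + (0 * 0 + 1 * r) ^+ 2 = r ^+ 2 :> R)%R by ring.
by rewrite sqrtr_sqr.
Qed.

Section Sep4.
Variable R : realType.
Variable T : tvsType R[i].
Local Notation rsc := (rscal R T).

Theorem separation (V : set T) (x : T) (A : set T) :
  (forall (a : R[i]) v w, V v -> V w -> V (a *: v + w)%R) -> V 0 ->
  nbhs x A -> (forall v, V v -> ~ A v) ->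
  exists L : T -> R[i],
    [/\ linear_fun L, continuous L, forall v, V v -> L v = 0 & L x != 0].
Proof.
move=> hV V0 Ax nVA.
have [B [oB Bx BA cB]] := nbhs_basis_convex _ _ _ _ Ax.
have VZ : forall r v, V v -> V (rsc r v).
  by move=> r v Vv; have := hV (r%:C) v 0 Vv V0; rewrite addr0.
have VD : forall v w, V v -> V w -> V (v + w)%R.
  by move=> v w Vv Vw; have := hV 1 v w Vv Vw; rewrite scale1r.
have VN : forall v, V v -> V (- v)%R.
  by move=> v Vv; have := VZ (-1)%R v Vv; rewrite rscNl rsc1.
pose p := pg R T x B.
have key : forall w, V w -> (1 <= p (x + w))%R.
  move=> w Vw; rewrite leNgt; apply/negP => /(pg_lt1 _ _ _ _ oB Bx cB) [_].
  rewrite opprD addrA subrr add0r => /BA; apply: nVA; exact: VN.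
pose G0 := [set q : T * R | exists t v, V v /\ q = (rsc t x + v, t)%R].
have lG0 : lgraph R T p G0.
  split.
  - move=> y a b [t [v [Vv [-> ->]]]] [t' [v' [Vv' [e ->]]]].
    apply/eqP; apply: contraT => tt.
    have e2 : rsc (t - t') x = (v' - v)%R.
      rewrite rscDl rscNl.
      have -> : rsc t x = (rsc t' x + v' - v)%R by rewrite -e addrK.
      by rewrite addrAC (addrC (rsc t' x) v') addrK.
    have : V x.
      have -> : x = rsc (t - t')^-1 (v' - v)%R by rewrite -e2 rscK // subr_eq0.
      by apply: VZ; apply: VD => //; apply: VN.
    by move/nVA/(_ (BA _ Bx)).
  - move=> y z a b r [t [v [Vv [-> ->]]]] [t' [v' [Vv' [-> ->]]]].
    exists (r * t + t')%R, (rsc r v + v')%R; split; first by apply: VD => //; apply: VZ.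
    by rewrite rscDr -rscM rscDl addrACA.
  - move=> y a [t [v [Vv [-> ->]]]].
    have [t0|t0] := leP t 0.
      by apply: le_trans t0 _; apply: pg0 _ _ _ _ oB Bx _.
    have -> : (rsc t x + v = rsc t (x + rsc t^-1 v))%R.
      by rewrite rscDr -rscM mulfV ?gt_eqF // rsc1.
    apply: le_trans (pgZ _ _ _ _ oB Bx _ _ t0).
    by rewrite ler_peMr ?(ltW t0) //; apply: key; apply: VZ.
have G0ne : G0 !=set0 by exists (rsc 1 x + 0, 1)%R, 1%R, 0%R.
have [l [llin ldom lG]] := hahn_banach_real _ _ _ (pgD _ _ _ _ oB Bx cB) (pgZ _ _ _ _ oB Bx) _ lG0 G0ne.
have l0 : l 0 = 0%R.
  have := llin 1%R 0 0; rewrite rsc1 addr0 mul1r => h.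
  by apply: (addrI (l 0)); rewrite addr0 -h.
have lZ : forall r y, l (rsc r y) = (r * l y)%R.
  by move=> r y; have := llin r y 0; rewrite addr0 l0 addr0.
have lD : forall y z, l (y + z)%R = (l y + l z)%R.
  by move=> y z; have := llin 1%R y z; rewrite rsc1 mul1r.
have lN : forall y, l (- y)%R = (- l y)%R.
  by move=> y; have := lZ (-1)%R y; rewrite rscNl rsc1 mulN1r.
have labs : forall y, (`|l y| <= p y)%R.
  move=> y; rewrite ler_norml ldom andbT lerNl -lN.
  by rewrite /p -(pgN R T x B y); apply: ldom.
have lx : l x = 1%R.
  have h : G0 (x, 1%R) by exists 1%R, 0; split => //; rewrite rsc1 addr0.
  exact: lG h.
have lV : forall v, V v -> l v = 0%R.
  move=> v Vv; have h : G0 (v, 0%R) by exists 0%R, v; split => //; rewrite rsc0 add0r.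
  exact: lG h.
have ir : forall r w, 'i *: rsc r w = rsc r ('i *: w).
  by move=> r w; rewrite /rscal !scalerA mulrC.
have iiy : forall w : T, 'i *: ('i *: w) = (- w)%R.
  by move=> w; rewrite scalerA complex_ii scaleN1r.
pose L := fun y => ((l y)%:C - 'i * (l ('i *: y))%:C)%R.
have Llin : linear_fun L.
  move=> a y z; case: a => al be.
  have ha : forall w : T, (al +i* be) *: w = (rsc al w + rsc be ('i *: w))%R.
    move=> w; rewrite /rscal scalerA -scalerDl; congr (_ *: _).
    by apply/eqP; rewrite eq_complex /=; apply/andP; split; apply/eqP; ring.
  rewrite /L ha !scalerDr !ir !iiy !lD !lZ !lN.
  move: (l y) (l ('i *: y)) (l z) (l ('i *: z)) => a1 a2 a3 a4.
  by apply/eqP; rewrite eq_complex /=; apply/andP; split; apply/eqP; ring.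
exists L; split => //.
- move=> y0; apply/(@cvgrPdist_lt _ (R[i]^o)) => eps eps0.
  have [er er0 ee] := @pos_complex R eps eps0; rewrite ee.
  pose k := (4 / er)%R; have k0 : (0 < k)%R by rewrite divr_gt0.
  have ki0 : (0 < k^-1)%R by rewrite invr_gt0.
  have kC0 : (k^-1)%:C != 0 by rewrite (fmorph_eq0 (real_complex R)) gt_eqF.
  have iC0 : ('i * k%:C)^-1 != 0.
    by rewrite invr_eq0 mulf_eq0 negb_or (fmorph_eq0 (real_complex R)) neq0Ci gt_eqF.
  have N1 := nbhs0Z kC0 (U0nbhs R T x B oB Bx).
  have N2 := nbhs0Z iC0 (U0nbhs R T x B oB Bx).
  apply: filterS (nbhsT y0 (filterI N1 N2)) => _ [w [[u1 U1 e1] [u2 U2 e2]] <-].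
  have -> : L (y0 + w)%R = (L y0 + L w)%R.
    by have := Llin 1%R y0 w; rewrite scale1r mul1r.
  rewrite opprD addrA subrr add0r normrN.
  have hw : (`|l w| <= k^-1)%R.
    apply: le_trans (labs w) _; rewrite /p -e1.
    apply: le_trans (gaugeZ_le _ _ _ (U0abs R T x B oB Bx) _ _ ki0) _.
    by apply: ler_piMr; [exact: ltW | exact: (pg_le1 R T x B)].
  have hiw : (`|l ('i *: w)| <= k^-1)%R.
    apply: le_trans (labs _) _; rewrite /p -e2 scalerA invfM mulrA mulfV; last first.
      by rewrite eq_complex /= oner_eq0 andbF.
    rewrite mul1r -(fmorphV (real_complex R)).
    apply: le_trans (gaugeZ_le _ _ _ (U0abs R T x B oB Bx) _ _ ki0) _.
    by apply: ler_piMr; [exact: ltW | exact: (pg_le1 R T x B)].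
  apply: le_lt_trans (ler_normB _ _) _.
  rewrite normcR normc_ir -rmorphD ltcR.
  apply: le_lt_trans (lerD hw hiw) _.
  rewrite /k invf_div.
  have -> : (er / 4 + er / 4 = er / 2)%R by field.
  by rewrite ltr_pdivrMr // ltr_pMr // ltr1n.
- move=> v Vv; rewrite /L lV // lV; last by have := hV 'i v 0 Vv V0; rewrite addr0.
  by rewrite rmorph0 mulr0 subr0.
- rewrite /L lx; apply/negP; rewrite eq_complex /= => /andP[h _].
  move: h; move: (l ('i *: x)) => r.
  have -> : (1 - (0 * r - 1 * 0) = 1 :> R)%R by ring.
  by rewrite oner_eq0.
Qed.
End Sep4.
Local Close Scope complex_scope.
Section Main.
Variable R : realType.
Variable E : tvsType R[i].
Variable zeta : nat -> E -> R[i].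

Lemma sum_widen (n N : nat) (c : nat -> R[i]) (f : E) : (n <= N)%N ->
  (\sum_(k < n) c k * zeta k f = \sum_(k < N) (if (k < n)%N then c k else 0) * zeta k f)%R.
Proof.
move=> nN; rewrite (big_ord_widen N (fun k => c k * zeta k f)) // big_mkcond /=.
by apply: eq_bigr => k _; case: ifP => //; rewrite mul0r.
Qed.

Lemma lin_span_comb (a : R[i]) u w : lin_span zeta u -> lin_span zeta w ->
  lin_span zeta (fun f => a * u f + w f)%R.
Proof.
move=> [n [c ->]] [n' [c' ->]].
exists (maxn n n'), (fun k => a * (if (k < n)%N then c k else 0) + (if (k < n')%N then c' k else 0))%R.
apply/funext => f.
rewrite (@sum_widen n (maxn n n')) ?leq_maxl // (@sum_widen n' (maxn n n')) ?leq_maxr //.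
rewrite big_distrr -big_split /=; apply: eq_bigr => k _.
by rewrite mulrA mulrDl.
Qed.

Lemma lin_span0 : lin_span zeta (fun _ => 0%R).
Proof. by exists 0%N, (fun _ => 0%R); apply/funext => f; rewrite big_ord0. Qed.

Lemma lin_span_elem k : lin_span zeta (zeta k).
Proof.
exists k.+1, (fun j => if j == k then 1 else 0)%R; apply/funext => f.
rewrite big_ord_recr /= eqxx mul1r big1 ?add0r // => j _.
by rewrite (ltn_eqF (ltn_ord j)) mul0r.
Qed.

End Main.
Theorem proposition2p8 (R : realType) (E : tvsType R[i])
    (H : completeNormedModType R[i]) (ip : H -> H -> R[i]) (j : E -> H)
    (xi : nat -> E) (zeta : nat -> E -> R[i]) :
  rigged_hilbert ip j -> schauder_basis xi -> coef_functionals xi zeta ->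
  [/\ (forall (T : tvsType R[i]) (iota : T -> E -> R[i]),
         dual_pair_topology iota ->
         closure (iota @^-1` lin_span zeta) = setT),
      (reflexive_space E ->
       forall (T : tvsType R[i]) (iota : T -> E -> R[i]),
         strong_dual iota ->
         closure (iota @^-1` lin_span zeta) = setT)
    & forall Psi : E -> R[i], conj_dual E Psi -> forall f : E,
        \sum_(k < n) Psi (xi k) * zeta k f @[n --> \oo] --> Psi f].
Proof.
move=> _ _ [zdual zexp].
have part3 : forall Psi : E -> R[i], conj_dual E Psi -> forall f : E,
    \sum_(k < n) Psi (xi k) * zeta k f @[n --> \oo] --> Psi f.
  move=> Psi [Pcl Pcont] f.
  have P0 : Psi 0 = 0.
    have := Pcl 1 0 0; rewrite scale1r addr0 conjC1 mul1r => h.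
    by apply: (addrI (Psi 0)); rewrite addr0 -h.
  have Psum : forall n, Psi (\sum_(k < n) (zeta k f)^* *: xi k) =
      \sum_(k < n) Psi (xi k) * zeta k f.
    elim=> [|n IH]; first by rewrite !big_ord0.
    by rewrite !big_ord_recr /= addrC Pcl IH conjCK addrC mulrC.
  have -> : (fun n => \sum_(k < n) Psi (xi k) * zeta k f) =
      Psi \o (fun n => \sum_(k < n) (zeta k f)^* *: xi k).
    by apply/funext => n /=; rewrite Psum.
  exact: cvg_comp (zexp f) (Pcont f).
have part1 : forall (T : tvsType R[i]) (iota : T -> E -> R[i]),
    dual_pair_topology iota -> closure (iota @^-1` lin_span zeta) = setT.
  move=> T iota [[iinj ilin irange] hdual].
  set V := iota @^-1` lin_span zeta.
  have iota0 : iota 0 = fun _ => 0.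
    apply/funext => f; have := congr1 (fun g => g f) (ilin 1 0 0).
    rewrite /= scale1r addr0 mul1r => h.
    by apply: (addrI (iota 0 f)); rewrite addr0 -h.
  have hV : forall (a : R[i]) v w, V v -> V w -> V (a *: v + w).
    by move=> a v w Vv Vw; rewrite /V /preimage /= ilin; apply: lin_span_comb.
  have V0 : V 0 by rewrite /V /preimage /= iota0; apply: lin_span0.
  apply/seteqP; split => // y _ A Ay.
  apply: contrapT => nh.
  have nVA : forall v, V v -> ~ A v by move=> v Vv Av; apply: nh; exists v.
  have [L [Llin Lcont LV Ly]] := separation _ _ _ _ _ hV V0 Ay nVA.
  have : [set L : T -> R[i] | linear_fun L /\ continuous L] L by [].
  rewrite hdual => -[f Lf].
  have zf : forall k, zeta k f = 0.
    move=> k; have : range iota (zeta k) by rewrite irange; apply: zdual.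
    move=> [vk _ ek].
    have := LV vk; rewrite /V /preimage /= ek Lf => /(_ (lin_span_elem _ _ zeta k)).
    by rewrite ek.
  have := part3 (iota y) _ f.
  have -> : (fun n => \sum_(k < n) iota y (xi k) * zeta k f) = fun _ => 0.
    by apply/funext => n; rewrite big1 // => k _; rewrite zf mulr0.
  have cd : conj_dual E (iota y) by rewrite -irange; exists y.
  move/(_ cd) => h0.
  have hs : hausdorff_space (R[i]^o) := @norm_hausdorff _ (R[i]^o).
  have e0 : iota y f = 0.
    by apply: (@cvg_unique (R[i]^o) hs _ _ _ _ h0); apply: cvg_cst.
  by move: Ly; rewrite Lf e0 eqxx.
split => //.
move=> refl T iota sd; have [rv1 rv2 rv3] := refl T iota sd.
case: (sd) => dm nbiff; case: (dm) => iinj ilin irange.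
apply: part1; split => //; apply/seteqP; split.
- move=> L [Llin Lcont]; have [f hf] := rv2 L Llin Lcont.
  by exists f; apply/funext => x; exact: hf.
- move=> _ [f ->]; split.
    by move=> a x y; rewrite ilin.
  move=> x; apply/(@cvgrPdist_lt _ (R[i]^o)) => eps eps0.
  apply/(nbiff x _).2; exists [set f]; split.
    move=> U U0.
    have /= := @scale_continuous _ E (0, f) U; rewrite scale0r => /(_ U0) [] /= N [N1 N2] NU.
    have [e e0 He] := (@nbhs_norm0P _ (R[i]^o) _).1 N1.
    have e0' : 0 < e := e0.
    exists (2 / e); split; first by rewrite divr_gt0.
    move=> mu hmu _ ->.
    have mupos : 0 < `|mu| by apply: lt_le_trans hmu; rewrite divr_gt0.
    have mu0 : mu != 0 by rewrite -normr_gt0.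
    exists (mu^-1 *: f); last by rewrite scalerA mulfV // scale1r.
    apply: (NU (mu^-1, f)); split => //=; last exact: nbhs_singleton.
    apply: He; rewrite /= normfV.
    have h1 : `|mu|^-1 <= e / 2.
      by rewrite -invf_div lef_pV2 // posrE // divr_gt0.
    apply: le_lt_trans h1 _.
    by rewrite ltr_pdivrMr // ltr_pMr // ltr1n.
  exists eps => // z /(_ f erefl) h.
  by rewrite distrC.
Qed.
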